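(* A frame $L$ is subfit if and only if every exact filter of $L$ is regular, i.e. $\mathsf{Ex}(L)\subseteq\mathsf R(L)$.
   Context: A frame is a complete lattice $L$ with $(\bigvee A)\wedge b=\bigvee_{a\in A}(a\wedge b)$. $L$ is subfit if for all $a,b$: whenever ($\forall c$, $a\vee c=1\Rightarrow b\vee c=1$) then $a\le b$. A filter is a nonempty up-closed subset closed under finite meets. A meet $\bigwedge M$ is exact if $(\bigwedge M)\vee b=\bigwedge_{a\in M}(a\vee b)$ for all $b$; an exact filter contains every exact meet of its subsets; $\mathsf{Ex}(L)$ is the set of exact filters. A filter is regular if it is of the form $\{x\in L\mid\forall b\in G,\ b\vee x=1\}$ for some filter $G$; $\mathsf R(L)$ is the set of regular filters. *)

(* Defs.v *)
Record Frame := {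
  carrier :> Type;
  fle : carrier -> carrier -> Prop;
  fle_refl : forall a, fle a a;
  fle_trans : forall a b c, fle a b -> fle b c -> fle a c;
  fle_antisym : forall a b, fle a b -> fle b a -> a = b;
  fsup : (carrier -> Prop) -> carrier;
  fsup_ub : forall (A : carrier -> Prop) a, A a -> fle a (fsup A);
  fsup_least : forall (A : carrier -> Prop) b,
      (forall a, A a -> fle a b) -> fle (fsup A) b;
  fmeet : carrier -> carrier -> carrier;
  fmeet_lb1 : forall a b, fle (fmeet a b) a;
  fmeet_lb2 : forall a b, fle (fmeet a b) b;
  fmeet_glb : forall a b c, fle c a -> fle c b -> fle c (fmeet a b);
  fdistr : forall (A : carrier -> Prop) b,
      fmeet (fsup A) b = fsup (fun c => exists a, A a /\ c = fmeet a b)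
}.

Arguments fle {f} _ _.
Arguments fsup {f} _.
Arguments fmeet {f} _ _.

Section FrameNotions.
Variable L : Frame.

Definition fjoin (a b : L) : L := fsup (fun c => c = a \/ c = b).
Definition ftop : L := fsup (fun _ => True).
Definition finf (M : L -> Prop) : L :=
  fsup (fun c => forall a, M a -> fle c a).

Definition subfit : Prop :=
  forall a b : L,
    (forall c : L, fjoin a c = ftop -> fjoin b c = ftop) -> fle a b.

Definition is_filter (F : L -> Prop) : Prop :=
  (exists x, F x) /\
  (forall x y, F x -> fle x y -> F y) /\
  (forall x y, F x -> F y -> F (fmeet x y)).

Definition exact_meet (M : L -> Prop) : Prop :=
  forall b : L,
    fjoin (finf M) b = finf (fun c => exists a, M a /\ c = fjoin a b).

Definition exact_filter (F : L -> Prop) : Prop :=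
  is_filter F /\
  forall M : L -> Prop, (forall a, M a -> F a) -> exact_meet M -> F (finf M).

Definition regular_filter (F : L -> Prop) : Prop :=
  exists G : L -> Prop, is_filter G /\
    forall x : L, F x <-> (forall b, G b -> fjoin b x = ftop).

End FrameNotions.

(* Main.v *)
Require Import Defs.

Section Aux.
Variable L : Frame.
Arguments fjoin {L}.
Arguments ftop {L}.
Arguments finf {L}.

Lemma jl (a b : L) : fle a (fjoin a b).
Proof. apply fsup_ub; now left. Qed.
Lemma jr (a b : L) : fle b (fjoin a b).
Proof. apply fsup_ub; now right. Qed.
Lemma jlub (a b c : L) : fle a c -> fle b c -> fle (fjoin a b) c.
Proof. intros; apply fsup_least; intros x [->| ->]; auto. Qed.
Lemma tp (x : L) : fle x ftop.
Proof. apply fsup_ub; exact I. Qed.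
Lemma tpeq (y : L) : fle ftop y -> y = ftop.
Proof. intros; apply fle_antisym; auto using tp. Qed.
Lemma jmono (a a' b b' : L) : fle a a' -> fle b b' -> fle (fjoin a b) (fjoin a' b').
Proof.
  intros; apply jlub; eapply fle_trans; eauto using jl, jr.
Qed.
Lemma inf_lb (M : L -> Prop) a : M a -> fle (finf M) a.
Proof. intros; apply fsup_least; auto. Qed.
Lemma inf_glb (M : L -> Prop) c : (forall a, M a -> fle c a) -> fle c (finf M).
Proof. intros; apply fsup_ub; auto. Qed.
Lemma jcomm (a b : L) : fjoin a b = fjoin b a.
Proof. apply fle_antisym; apply jlub; auto using jl, jr. Qed.

Lemma meet_sup_le (A : L -> Prop) y z :
  (forall a, A a -> fle (fmeet a y) z) -> fle (fmeet (fsup A) y) z.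
Proof.
  intros H; rewrite fdistr; apply fsup_least.
  intros c [a [Ha ->]]; auto.
Qed.

Lemma meet_top (b b' f : L) : fjoin b f = ftop -> fjoin b' f = ftop ->
  fjoin (fmeet b b') f = ftop.
Proof.
  intros H1 H2. apply tpeq. rewrite <- H2. apply jlub; [|apply jr].
  apply fle_trans with (fmeet (fjoin b f) b').
  { apply fmeet_glb; [rewrite H1; apply tp | apply fle_refl]. }
  apply meet_sup_le. intros a [-> | ->].
  - eapply fle_trans; [|apply jl]. apply fmeet_glb; [apply fmeet_lb1|apply fmeet_lb2].
  - eapply fle_trans; [|apply jr]. apply fmeet_lb1.
Qed.

Lemma jl' (a b c : L) : fle a b -> fle a (fjoin b c).
Proof. intros; eapply fle_trans; eauto using jl. Qed.
Lemma jr' (a b c : L) : fle a c -> fle a (fjoin b c).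
Proof. intros; eapply fle_trans; eauto using jr. Qed.
End Aux.

Ltac leaf := solve [apply fle_refl | apply jl'; leaf | apply jr'; leaf].
Ltac jsolve := repeat apply jlub; leaf.

Theorem mainTheorem10 (L : Frame) :
  subfit L <-> (forall F : L -> Prop, exact_filter L F -> regular_filter L F).
Proof.
  split.
  - intros Hsf F [[[x0 Hx0] [Hup Hmeet]] Hex].
    set (G := fun b : L => forall f, F f -> fjoin L b f = ftop L).
    exists G. split.
    { split; [|split].
      - exists (ftop L). intros f _. apply tpeq. apply jl.
      - intros x y Hx Hxy f Hf. apply tpeq. rewrite <- (Hx f Hf).
        apply jmono; auto using fle_refl.
      - intros x y Hx Hy f Hf. apply meet_top; auto. }
    intros x; split.
    + intros Hx b Hb. apply Hb; auto.
    + intros Hx.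
      set (M := fun y : L => exists f, F f /\ y = fjoin L x f).
      assert (Key : forall b, fle (finf L (fun c => exists a, M a /\ c = fjoin L a b))
                                  (fjoin L x b)).
      { intros b. apply Hsf. intros c Hc.
        set (g := fjoin L (fjoin L x b) c).
        assert (Hg : G g).
        { intros f Hf. apply tpeq. rewrite <- Hc.
          apply fle_trans with (fjoin L (fjoin L (fjoin L x f) b) c).
          - apply jmono; [|apply fle_refl]. apply inf_lb.
            exists (fjoin L x f); split; auto. exists f; auto.
          - unfold g. jsolve. }
        apply tpeq. rewrite <- (Hx g Hg). apply (jlub L g x g); [apply fle_refl|].
        unfold g. leaf. }
      assert (HxM : fle x (finf L M)).
      { apply inf_glb. intros a [f [_ ->]]. apply jl. }
      assert (HMex : exact_meet L M).
      { intros b. apply fle_antisym.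
        - apply inf_glb. intros a' [a [Ha ->]]. apply jmono; [apply inf_lb; auto|apply fle_refl].
        - eapply fle_trans; [apply Key|]. apply jmono; auto using fle_refl. }
      assert (HFM : F (finf L M)).
      { apply Hex; auto. intros a [f [Hf ->]]. apply Hup with f; auto. apply jr. }
      apply Hup with (finf L M); auto.
      eapply fle_trans; [|eapply fle_trans; [apply (Key x)|apply jlub; apply fle_refl]].
      apply inf_glb. intros a' [a [Ha ->]]. eapply fle_trans; [apply inf_lb; eauto|apply jl].
  - intros H a b Hab.
    destruct (H (fun x => fle a x)) as [G [HG HF]].
    + split.
      * split; [exists a; apply fle_refl|split].
        -- intros; eapply fle_trans; eauto.
        -- intros; apply fmeet_glb; auto.
      * intros M HM _. apply inf_glb. auto.
    + apply HF. intros g Hg. rewrite jcomm. apply Hab. rewrite jcomm.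
      apply (proj1 (HF a) (fle_refl _ a)); auto.
Qed.
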